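(* Let $m\ge2$, $n\ge1$, $k\ge1$ an integer and $\mathcal{A}\in\mathbb{C}^{[m,n]}$. Then (1) $\rho(\mathcal{A}^k)\le(R(\mathcal{A}))^{\mu_k}$; (2) if $\mathcal{A}$ is a nonnegative tensor, then $(r(\mathcal{A}))^{\mu_k}\le\rho(\mathcal{A}^k)\le(R(\mathcal{A}))^{\mu_k}$, where $\mu_k=\frac{(m-1)^k-1}{m-2}$ if $m>2$ and $\mu_k=k$ if $m=2$.
   Context: $[n]=\{1,\ldots,n\}$. $\mathbb{C}^{[m,n]}$ denotes the set of order $m$, dimension $n$ complex tensors. For a tensor $\mathcal{T}=(t_{i_1\cdots i_p})$ of order $p$ and dimension $n$: $r_i(\mathcal{T})=\sum_{i_2,\ldots,i_p=1}^n|t_{ii_2\cdots i_p}|$, $r(\mathcal{T})=\min_{i\in[n]}r_i(\mathcal{T})$, $R(\mathcal{T})=\max_{i\in[n]}r_i(\mathcal{T})$. General product: for $\mathcal{A}=(a_{i_1\cdots i_m})$ of order $m\ge2$ and $\mathcal{B}=(b_{i_1\cdots i_q})$ of order $q\ge1$, $\mathcal{A}\mathcal{B}=(c_{i\alpha_1\cdots\alpha_{m-1}})$ is the order $(m-1)(q-1)+1$, dimension $n$ tensor with $c_{i\alpha_1\cdots\alpha_{m-1}}=\sum_{i_2,\ldots,i_m=1}^n a_{ii_2\cdots i_m}b_{i_2\alpha_1}\cdots b_{i_m\alpha_{m-1}}$, $\alpha_j\in[n]^{q-1}$ (where $b_{j\alpha}$ with $\alpha=(j_2,\ldots,j_q)$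 means $b_{jj_2\cdots j_q}$). Powers: $\mathcal{A}^1=\mathcal{A}$, $\mathcal{A}^{j+1}=\mathcal{A}\mathcal{A}^j$. Eigenvalues of a tensor $\mathcal{T}$ of order $p\ge2$: $\lambda\in\mathbb{C}$ such that there is a nonzero $x\in\mathbb{C}^n$ with $\sum_{i_2,\ldots,i_p=1}^n t_{ii_2\cdots i_p}x_{i_2}\cdots x_{i_p}=\lambda x_i^{p-1}$ for all $i\in[n]$; $\rho(\mathcal{T})$ is the maximum modulus of the eigenvalues. *)

(* Defs.v *)
From HB Require Import structures.
From mathcomp Require Import all_boot all_order all_algebra complex.
From mathcomp Require Import reals.
Set Implicit Arguments. Unset Strict Implicit. Unset Printing Implicit Defensive.
Import Order.TTheory GRing.Theory Num.Theory.
Local Open Scope ring_scope.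

(* A tensor of dimension n (of some order p, kept separately) is represented
   by its entry function on index sequences  seq 'I_n -> C; only sequences of
   length p are meaningful.  The entry t_{i1 ... ip} is  T [:: i1; ...; ip]. *)

Definition of_tuple (C : nzRingType) (m n : nat) (A : m.-tuple 'I_n -> C)
  : seq 'I_n -> C :=
  fun s => match insub s with Some t => A t | None => 0 end.

(* General product: A of order m, B of order q; result of order (m-1)(q-1)+1.
   c_{i a_1 ... a_{m-1}} = sum_{i2..im} a_{i i2..im} b_{i2 a_1} ... b_{im a_{m-1}},
   with a_j in [n]^(q-1) (consecutive blocks of length q-1). *)
Definition tmul (C : nzRingType) (n m q : nat) (A B : seq 'I_n -> C)
  : seq 'I_n -> C :=
  fun s => match s with
  | [::] => 0
  | i :: rest =>
      let al := reshape (nseq (m - 1)%N (q - 1)%N) rest in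
      \sum_(t : (m - 1)%N.-tuple 'I_n)
         A (i :: t) * \prod_(j < m - 1) B (tnth t j :: nth [::] al j)
  end.

(* Powers: A^1 = A, A^(j+1) = A A^j; A^j has order (m-1)^j + 1.
   (tpow m A 0 is an unused convention, equal to A.) *)
Fixpoint tpow (C : nzRingType) (n m : nat) (A : seq 'I_n -> C) (k : nat)
  : seq 'I_n -> C :=
  match k with
  | 0 => A
  | k'.+1 => if k' is 0 then A
             else tmul m ((m - 1)%N ^ k' + 1) A (tpow m A k')
  end.

Definition is_eigenvalue (C : nzRingType) (n p : nat) (T : seq 'I_n -> C)
  (l : C) : Prop :=
  exists x : 'I_n -> C, (exists i, x i != 0) /\
    forall i : 'I_n,
      \sum_(t : (p - 1)%N.-tuple 'I_n) T (i :: t) * \prod_(j < p - 1) x (tnth t j)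
      = l * x i ^+ (p - 1)%N.

Definition rowsum (C : numDomainType) (n p : nat) (T : seq 'I_n -> C) (i : 'I_n)
  : C := \sum_(t : (p - 1)%N.-tuple 'I_n) `|T (i :: t)|.

(* R(T) = max_i r_i(T) (all r_i are >= 0, so 0 is a harmless neutral). *)
Definition Rmax (C : numDomainType) (n p : nat) (T : seq 'I_n -> C) : C :=
  \big[Num.max/0]_(i < n) rowsum p T i.

(* r(T) = min_i r_i(T) (for n >= 1; R(T) >= every r_i, so it is neutral). *)
Definition rmin (C : numDomainType) (n p : nat) (T : seq 'I_n -> C) : C :=
  \big[Num.min/Rmax p T]_(i < n) rowsum p T i.

Definition mu (m k : nat) : nat :=
  if m == 2 then k else (((m - 1)%N ^ k - 1) %/ (m - 2))%N.

(* Main.v *)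
Require Import Defs.
From HB Require Import structures.
From mathcomp Require Import all_boot all_order all_algebra complex.
From mathcomp Require Import reals.
From mathcomp Require Import boolp classical_sets topology normedtype derive.
From mathcomp Require Import ring lra zify.
Import Order.TTheory GRing.Theory Num.Theory.
Import numFieldNormedType.Exports.
Set Implicit Arguments. Unset Strict Implicit. Unset Printing Implicit Defensive.
Local Open Scope ring_scope.
Section Tup.
Variable C : nmodType.
Variable n : nat.

Lemma sum_tuple_cast a b (e : a = b) (F : seq 'I_n -> C) :
  \sum_(s : a.-tuple 'I_n) F s = \sum_(s : b.-tuple 'I_n) F s.
Proof. by case: b / e. Qed.

Lemma sum_tuple_cons k (F : seq 'I_n -> C) :
  \sum_(s : k.+1.-tuple 'I_n) F s = \sum_(x : 'I_n) \sum_(t : k.-tuple 'I_n) F (x :: t).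
Proof.
rewrite pair_big /=.
pose h := fun p : 'I_n * k.-tuple 'I_n => [tuple of p.1 :: p.2].
rewrite (reindex h) /=; first by [].
exists (fun s : k.+1.-tuple 'I_n => (thead s, [tuple of behead s])) => [[x t] _|s _] /=.
  by congr (_, _); apply: val_inj.
by apply: val_inj => /=; case: s => -[|x t].
Qed.

Lemma sum_tuple_cat a b (F : seq 'I_n -> C) :
  \sum_(s : (a + b).-tuple 'I_n) F s =
  \sum_(u : a.-tuple 'I_n) \sum_(v : b.-tuple 'I_n) F (u ++ v).
Proof.
elim: a F => [|a IH] F.
  rewrite (sum_tuple_cast (add0n b)).
  by rewrite (big_pred1 [tuple]) //=; move=> t; apply/esym/eqP/val_inj; case: t => -[].
rewrite (sum_tuple_cast (addSn a b)) sum_tuple_cons.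
rewrite (@sum_tuple_cons a (fun s => \sum_(v : b.-tuple 'I_n) F (s ++ v))).
by apply: eq_bigr => x _; rewrite (IH (fun s => F (x :: s))).
Qed.

End Tup.

Section Blocks.
Variable C : comNzRingType.
Variable n : nat.

Lemma sum_tuple0 (F : seq 'I_n -> C) : \sum_(s : 0.-tuple 'I_n) F s = F [::].
Proof. by rewrite (big_pred1 [tuple]) //= => t; apply/esym/eqP/val_inj; case: t => -[]. Qed.

Lemma sum_blocks c b (f : 'I_c -> seq 'I_n -> C) :
  \sum_(s : (c * b).-tuple 'I_n) \prod_(j < c) f j (nth [::] (reshape (nseq c b) s) j)
  = \prod_(j < c) \sum_(u : b.-tuple 'I_n) f j u.
Proof.
elim: c f => [|c IH] f.
  rewrite (sum_tuple_cast (mul0n b) (fun s => \prod_(j < 0) f j (nth [::] (reshape (nseq 0 b) s) j))).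
  by rewrite (sum_tuple0 (fun s => \prod_(j < 0) f j (nth [::] (reshape (nseq 0 b) s) j))) !big_ord0.
rewrite (sum_tuple_cast (mulSn c b) (fun s => \prod_(j < c.+1) f j (nth [::] (reshape (nseq c.+1 b) s) j))).
rewrite (@sum_tuple_cat _ _ b (c * b) (fun s => \prod_(j < c.+1) f j (nth [::] (reshape (nseq c.+1 b) s) j))).
rewrite [RHS]big_ord_recl -(IH (fun j => f (lift ord0 j))) mulr_suml.
apply: eq_bigr => u _; rewrite mulr_sumr; apply: eq_bigr => v _.
rewrite big_ord_recl /= take_size_cat ?size_tuple // drop_size_cat ?size_tuple //.
Qed.

End Blocks.

Lemma tmul_rowsum_eq (C : comNzRingType) n m q (A B : seq 'I_n -> C) i :
  \sum_(s : ((m - 1) * (q - 1)).-tuple 'I_n) tmul m q A B (i :: s) =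
  \sum_(t : (m - 1).-tuple 'I_n) A (i :: t) *
     \prod_(j < m - 1) \sum_(u : (q - 1).-tuple 'I_n) B (tnth t j :: u).
Proof.
rewrite /tmul /= exchange_big /=; apply: eq_bigr => t _; rewrite -mulr_sumr.
congr (_ * _).
exact: (@sum_blocks _ _ (m - 1) (q - 1) (fun j u => B (tnth t j :: u))).
Qed.

Lemma tmul_rowsum_le (C : numDomainType) n m q (A B : seq 'I_n -> C) i :
  \sum_(s : ((m - 1) * (q - 1)).-tuple 'I_n) `|tmul m q A B (i :: s)| <=
  \sum_(t : (m - 1).-tuple 'I_n) `|A (i :: t)| *
     \prod_(j < m - 1) \sum_(u : (q - 1).-tuple 'I_n) `|B (tnth t j :: u)|.
Proof.
rewrite -(tmul_rowsum_eq m q (fun s => `|A s|) (fun s => `|B s|) i).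
apply: ler_sum => s _; rewrite /tmul /=.
apply: le_trans (ler_norm_sum _ _ _) _; apply: ler_sum => t _.
by rewrite normrM normr_prod.
Qed.

Local Open Scope nat_scope.

Definition geo (a k : nat) : nat := \sum_(i < k) a ^ i.

Lemma geoS a k : geo a k.+1 = (1 + a * geo a k)%N.
Proof.
rewrite /geo big_ord_recl expn0 big_distrr /=; congr (_ + _)%N.
by apply: eq_bigr => i _; rewrite expnS.
Qed.

Lemma geo_eq a k : (0 < a)%N -> (a ^ k - 1 = (a - 1) * geo a k)%N.
Proof.
move=> a0; elim: k => [|k IH]; first by rewrite /geo big_ord0 expn0 muln0.
rewrite geoS expnS.
have X1 : (1 <= a ^ k)%N by rewrite expn_gt0 a0.
move: IH; set X := a ^ k; set g := geo a k => IH.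
nia.
Qed.

Lemma mu1 m : (2 <= m)%N -> mu m 1 = 1%N.
Proof.
move=> m2; rewrite /mu; case: eqP => // /eqP m2'.
rewrite expn1 (_ : m - 1 - 1 = m - 2); last by lia.
by rewrite divnn; have -> : (0 < m - 2) by lia.
Qed.

Lemma muS m k : (2 <= m)%N -> mu m k.+1 = (1 + (m - 1) * mu m k)%N.
Proof.
move=> m2; rewrite /mu; case: eqP => [|/eqP m2'].
  by rewrite (_ : 2%R = 2%N) // => ->; lia.
have a0 : (0 < m - 1)%N by lia.
rewrite !geo_eq // (_ : (m - 1 - 1 = m - 2)%N); last by lia.
have m20 : (0 < m - 2)%N by lia.
by rewrite !mulKn // geoS.
Qed.

Local Open Scope ring_scope.

Section Bounds.
Variable C : numDomainType.

Lemma max_real (x y : C) : x \is Num.real -> y \is Num.real ->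
  [/\ Num.max x y \is Num.real, x <= Num.max x y & y <= Num.max x y].
Proof.
move=> xr yr; case/orP: (real_leVge xr yr) => xy.
  by rewrite max_r.
by rewrite max_l.
Qed.

Lemma min_real (x y : C) : x \is Num.real -> y \is Num.real ->
  [/\ Num.min x y \is Num.real, Num.min x y <= x & Num.min x y <= y].
Proof.
move=> xr yr; case/orP: (real_leVge xr yr) => xy.
  by rewrite min_l.
by rewrite min_r.
Qed.

Lemma bigmax_ub (I : eqType) (r : seq I) (F : I -> C) x0 :
  x0 \is Num.real -> (forall i, F i \is Num.real) ->
  (\big[Num.max/x0]_(i <- r) F i \is Num.real) /\
  (x0 <= \big[Num.max/x0]_(i <- r) F i) /\
  (forall i, i \in r -> F i <= \big[Num.max/x0]_(i <- r) F i).
Proof.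
move=> x0r Fr; elim: r => [|a r [Br [x0B FB]]]; first by rewrite big_nil.
rewrite big_cons; have [Mr aM BM] := max_real (Fr a) Br.
split => //; split; first exact: le_trans BM.
by move=> i; rewrite inE => /orP [/eqP ->//|/FB iB]; apply: le_trans BM.
Qed.

Lemma bigmin_lb (I : eqType) (r : seq I) (F : I -> C) x0 :
  x0 \is Num.real -> (forall i, F i \is Num.real) ->
  (\big[Num.min/x0]_(i <- r) F i \is Num.real) /\
  (\big[Num.min/x0]_(i <- r) F i <= x0) /\
  (forall i, i \in r -> \big[Num.min/x0]_(i <- r) F i <= F i).
Proof.
move=> x0r Fr; elim: r => [|a r [Br [x0B FB]]]; first by rewrite big_nil.
rewrite big_cons; have [Mr aM BM] := min_real (Fr a) Br.
split => //; split; first exact: le_trans BM _.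
by move=> i; rewrite inE => /orP [/eqP ->//|/FB iB]; apply: le_trans BM _.
Qed.

Lemma bigmin_glb (I : eqType) (r : seq I) (F : I -> C) x0 y :
  y <= x0 -> (forall i, y <= F i) -> y <= \big[Num.min/x0]_(i <- r) F i.
Proof.
move=> yx0 yF; elim: r => [|a r IH]; first by rewrite big_nil.
by rewrite big_cons /Order.min; case: ifP => _; [exact: yF | exact: IH].
Qed.

Variable n : nat.
Implicit Types (T : seq 'I_n -> C).

Lemma rowsum_ge0 p T i : 0 <= rowsum p T i.
Proof. by apply: sumr_ge0 => t _. Qed.

Lemma rowsum_le_Rmax p T i : rowsum p T i <= Rmax p T.
Proof.
have [_ [_ H]] := @bigmax_ub _ (index_enum 'I_n) (rowsum p T) 0 (real0 _)
  (fun i => ger0_real (rowsum_ge0 p T i)).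
by apply: H; rewrite mem_index_enum.
Qed.

Lemma Rmax_ge0 p T : 0 <= Rmax p T.
Proof.
by have [_ [H _]] := @bigmax_ub _ (index_enum 'I_n) (rowsum p T) 0 (real0 _)
  (fun i => ger0_real (rowsum_ge0 p T i)).
Qed.

Lemma rmin_le_rowsum p T i : rmin p T <= rowsum p T i.
Proof.
have [_ [_ H]] := @bigmin_lb _ (index_enum 'I_n) (rowsum p T) (Rmax p T)
  (ger0_real (Rmax_ge0 p T)) (fun i => ger0_real (rowsum_ge0 p T i)).
by apply: H; rewrite mem_index_enum.
Qed.

Lemma rmin_ge0 p T : 0 <= rmin p T.
Proof. by apply: bigmin_glb; [exact: Rmax_ge0 | exact: rowsum_ge0]. Qed.

Lemma rowsum_cast p1 p2 T i : (p1 - 1 = p2 - 1)%N -> rowsum p1 T i = rowsum p2 T i.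
Proof. by move=> e; rewrite /rowsum (sum_tuple_cast e (fun s => `|T (i :: s)|)). Qed.

End Bounds.

Section Pow.
Variable C : numDomainType.
Variable n : nat.
Implicit Types (T : seq 'I_n -> C).

Lemma prod_cstC d (c : C) : \prod_(j < d) c = c ^+ d.
Proof. by rewrite prodr_const card_ord. Qed.

Lemma tpow_ord_eq m k : (2 <= m)%N ->
  ((m - 1) ^ k.+2 + 1 - 1 = (m - 1) * ((m - 1) ^ k.+1 + 1 - 1))%N.
Proof. by move=> m2; rewrite !addnK expnS. Qed.

Lemma mu_exp (x : C) m k : (2 <= m)%N -> x * (x ^+ mu m k.+1) ^+ (m - 1) = x ^+ mu m k.+2.
Proof. by move=> m2; rewrite (muS k.+1 m2) exprD expr1 mulnC exprM. Qed.

Lemma tpow_rowsum_ub m T k j : (2 <= m)%N -> (1 <= k)%N ->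
  rowsum ((m - 1) ^ k + 1) (tpow m T k) j <= Rmax m T ^+ mu m k.
Proof.
move=> m2; elim: k j => [//|k IH] j _.
case: k IH j => [_|k IH] j.
  rewrite mu1 // expr1 /=; rewrite (@rowsum_cast _ _ _ m); first exact: rowsum_le_Rmax.
  by rewrite expn1 addnK.
have -> : tpow m T k.+2 = tmul m ((m - 1) ^ k.+1 + 1) T (tpow m T k.+1) by [].
rewrite /rowsum (sum_tuple_cast (tpow_ord_eq k m2)
  (fun s => `|tmul m ((m - 1) ^ k.+1 + 1) T (tpow m T k.+1) (j :: s)|)).
apply: le_trans (tmul_rowsum_le _ _ _ _ _) _.
rewrite -mu_exp //.
apply: (le_trans (y := \sum_(t : (m - 1).-tuple 'I_n) `|T (j :: t)| * (Rmax m T ^+ mu m k.+1) ^+ (m - 1))).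
  apply: ler_sum => t _; apply: ler_wpM2l => //.
  rewrite -prod_cstC; apply: ler_prod => l _; rewrite sumr_ge0 //=.
  exact: IH.
rewrite -mulr_suml; apply: ler_wpM2r; first by rewrite exprn_ge0 // exprn_ge0 // Rmax_ge0.
exact: (rowsum_le_Rmax m T j).
Qed.

Lemma tmul_ge0 m q (A B : seq 'I_n -> C) : (forall s, 0 <= A s) -> (forall s, 0 <= B s) ->
  forall s, 0 <= tmul m q A B s.
Proof.
move=> A0 B0 [|i s] //=; apply: sumr_ge0 => t _; rewrite mulr_ge0 //.
by apply: prodr_ge0 => l _.
Qed.

Lemma tpow_ge0 m T k : (forall s, 0 <= T s) -> forall s, 0 <= tpow m T k s.
Proof.
move=> T0; elim: k => [//|[//|k] IH] s /=.
exact: tmul_ge0.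
Qed.

Lemma rowsum_nneg p T i : (forall s, 0 <= T s) ->
  rowsum p T i = \sum_(t : (p - 1).-tuple 'I_n) T (i :: t).
Proof. by move=> T0; apply: eq_bigr => t _; rewrite ger0_norm. Qed.

Lemma tpow_rowsum_lb m T k j : (2 <= m)%N -> (1 <= k)%N -> (forall s, 0 <= T s) ->
  rmin m T ^+ mu m k <= rowsum ((m - 1) ^ k + 1) (tpow m T k) j.
Proof.
move=> m2 + T0; elim: k j => [//|k IH] j _.
case: k IH j => [_|k IH] j.
  rewrite mu1 // expr1 /=; rewrite (@rowsum_cast _ _ _ m); first exact: rmin_le_rowsum.
  by rewrite expn1 addnK.
have -> : tpow m T k.+2 = tmul m ((m - 1) ^ k.+1 + 1) T (tpow m T k.+1) by [].
have P0 := tpow_ge0 m k.+1 T0.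
rewrite rowsum_nneg; last by apply: tmul_ge0.
rewrite (sum_tuple_cast (tpow_ord_eq k m2)
  (fun s => tmul m ((m - 1) ^ k.+1 + 1) T (tpow m T k.+1) (j :: s))).
rewrite tmul_rowsum_eq -mu_exp //.
apply: (le_trans (y := \sum_(t : (m - 1).-tuple 'I_n) T (j :: t) * (rmin m T ^+ mu m k.+1) ^+ (m - 1))); last first.
  apply: ler_sum => t _; apply: ler_wpM2l => //.
  rewrite -prod_cstC; apply: ler_prod => l _; rewrite exprn_ge0 ?rmin_ge0 //=.
  by rewrite -rowsum_nneg //; exact: IH.
rewrite -mulr_suml; apply: ler_wpM2r; first by rewrite exprn_ge0 // exprn_ge0 // rmin_ge0.
by rewrite -rowsum_nneg //; exact: (rmin_le_rowsum m T j).
Qed.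

End Pow.

Lemma exists_max (T : eqType) (C : numDomainType) (s : seq T) (f : T -> C) :
  s != [::] -> (forall x, f x \is Num.real) ->
  exists2 i, i \in s & forall j, j \in s -> f j <= f i.
Proof.
move=> + fr; elim: s => [//|a s IH] _.
case: (altP (s =P [::])) => [->|/IH [i iS fi]].
  by exists a; rewrite ?inE // => j; rewrite inE => /eqP ->.
case/orP: (real_leVge (fr a) (fr i)) => ai.
  exists i; first by rewrite inE iS orbT.
  by move=> j; rewrite inE => /orP [/eqP -> //|/fi].
exists a; first by rewrite inE eqxx.
move=> j; rewrite inE => /orP [/eqP -> //|/fi fj]; exact: le_trans ai.
Qed.

Lemma exists_max_ord (C : numDomainType) n (f : 'I_n -> C) :
  (0 < n)%N -> (forall x, f x \is Num.real) -> exists i, forall j, f j <= f i.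
Proof.
move=> n0 fr; have [|i _ fi] := @exists_max _ _ (enum 'I_n) f _ fr.
  by rewrite -size_eq0 size_enum_ord -lt0n.
by exists i => j; apply: fi; rewrite mem_enum.
Qed.

Lemma eig_bound (C : numDomainType) n p (T : seq 'I_n -> C) l :
  is_eigenvalue p T l -> exists i, `|l| <= rowsum p T i.
Proof.
case=> x [[i0 xi0] eq].
have n0 : (0 < n)%N := leq_ltn_trans (leq0n i0) (ltn_ord i0).
have [i im] := @exists_max_ord _ _ (fun j => `|x j|) n0 (fun j => normr_real _).
exists i.
have xi0' : 0 < `|x i| by apply: lt_le_trans (im i0); rewrite normr_gt0.
rewrite -(ler_pM2r (exprn_gt0 (p - 1) xi0')) -normrX -normrM -eq.
apply: le_trans (ler_norm_sum _ _ _) _.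
rewrite /rowsum mulr_suml; apply: ler_sum => t _.
rewrite normrM; apply: ler_wpM2l => //.
rewrite normr_prod normrX -prod_cstC; apply: ler_prod => k _.
by rewrite normr_ge0 im.
Qed.

Section PF.
Local Open Scope classical_set_scope.
Variable R : realType.
Local Notation V n := 'rV[R]_(n.+1).

Lemma cont_sum (n : nat) (I : Type) (r : seq I) (P : pred I) (F : I -> V n -> R) :
  (forall j, continuous (F j)) -> continuous (fun v => \sum_(j <- r | P j) F j v).
Proof.
move=> cF; elim: r => [|a r IH].
  have -> : (fun v => \sum_(j <- [::] | P j) F j v) = fun=> 0.
    by apply: funext => v; rewrite big_nil.
  exact: cst_continuous.
have -> : (fun v => \sum_(j <- a :: r | P j) F j v) =
   fun v => if P a then F a v + \sum_(j <- r | P j) F j v else \sum_(j <- r | P j) F j v.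
  by apply: funext => v; rewrite big_cons.
case: (P a); last exact: IH.
by move=> v; apply: continuousD; [exact: cF | exact: IH].
Qed.

Lemma cont_prod (n : nat) (I : Type) (r : seq I) (P : pred I) (F : I -> V n -> R) :
  (forall j, continuous (F j)) -> continuous (fun v => \prod_(j <- r | P j) F j v).
Proof.
move=> cF; elim: r => [|a r IH].
  have -> : (fun v => \prod_(j <- [::] | P j) F j v) = fun=> 1.
    by apply: funext => v; rewrite big_nil.
  exact: cst_continuous.
have -> : (fun v => \prod_(j <- a :: r | P j) F j v) =
   fun v => if P a then F a v * \prod_(j <- r | P j) F j v else \prod_(j <- r | P j) F j v.
  by apply: funext => v; rewrite big_cons.
case: (P a); last exact: IH.
by move=> v; apply: continuousM; [exact: cF | exact: IH].
Qed.

Definition xv n (v : V n) (i : 'I_n) : R := v ord0 (lift ord_max i).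
Definition lv n (v : V n) : R := v ord0 ord_max.
Definition mkv n (x : 'I_n -> R) (l : R) : V n :=
  \row_(j < n.+1) match unlift ord_max j with Some i => x i | None => l end.

Lemma xv_mkv n x l i : xv (@mkv n x l) i = x i.
Proof. by rewrite /xv /mkv mxE liftK. Qed.
Lemma lv_mkv n x l : lv (@mkv n x l) = l.
Proof. by rewrite /lv /mkv mxE unlift_none. Qed.

Lemma xv_cont n i : continuous (fun v : V n => xv v i).
Proof. exact: coord_continuous. Qed.
Lemma lv_cont n : continuous (fun v : V n => lv v).
Proof. exact: coord_continuous. Qed.


Definition Pv n d (S : 'I_n -> d.-tuple 'I_n -> R) (x : 'I_n -> R) (i : 'I_n) : R :=
  \sum_(t : d.-tuple 'I_n) S i t * \prod_(j < d) x (tnth t j).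
Definition rs n d (S : 'I_n -> d.-tuple 'I_n -> R) (i : 'I_n) : R :=
  \sum_(t : d.-tuple 'I_n) S i t.
Definition ctup n d (i : 'I_n) : d.-tuple 'I_n := [tuple of nseq d i].

Lemma prod_ctup n d (x : 'I_n -> R) i : \prod_(j < d) x (tnth (ctup d i) j) = x i ^+ d.
Proof.
by under eq_bigr do rewrite /ctup tnth_nseq; rewrite prodr_const card_ord.
Qed.

Lemma prod_cst d (c : R) : \prod_(j < d) c = c ^+ d.
Proof. by rewrite prodr_const card_ord. Qed.

Lemma Pv_cont n d S i : continuous (fun v : V n => @Pv n d S (xv v) i).
Proof.
apply: cont_sum => t v; apply: continuousM; first exact: cst_continuous.
by apply: cont_prod => j; exact: xv_cont.
Qed.

Lemma Pv_mono n d S x y i : (forall i t, 0 <= S i t) ->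
  (forall i, 0 <= x i <= y i) -> @Pv n d S x i <= Pv S y i.
Proof.
move=> S0 xy; apply: ler_sum => t _; apply: ler_wpM2l; first exact: S0.
by apply: ler_prod => j _; exact: xy.
Qed.

Lemma pos_lb n (f : 'I_n -> R) : (forall j, 0 < f j) -> exists2 e, 0 < e & forall j, e <= f j.
Proof.
move=> fp; exists (\big[Num.min/1]_j f j).
  by elim/big_ind: _ => // a b; rewrite lt_min => -> ->.
move=> j; rewrite (bigD1 j) //=; by rewrite ge_min lexx.
Qed.

Lemma rs_le_sum n d S i : (forall i t, 0 <= S i t) -> @rs n d S i <= \sum_j rs S j.
Proof.
move=> S0; rewrite (bigD1 i) //= lerDl; apply: sumr_ge0 => j _.
by apply: sumr_ge0 => t _.
Qed.

Lemma lam_bound n d S (x : 'I_n -> R) l : (0 < n)%N -> (forall i t, 0 <= S i t) ->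
  (forall i, 0 <= x i) -> \sum_i x i = 1 ->
  (forall i, l * x i ^+ d <= Pv S x i) -> l <= \sum_j @rs n d S j.
Proof.
move=> n0 S0 x0 sx lP.
have [i im] := exists_max_ord n0 (fun j => ger0_real (x0 j)).
have xi0 : 0 < x i.
  rewrite lt_def x0 andbT; apply/negP => /eqP xi0.
  move: sx; rewrite (eq_bigr (fun=> 0)) ?big1 //; last first.
    by move=> j _; apply/eqP; rewrite eq_le x0 andbT -xi0 im.
  by move/eqP; rewrite eq_sym oner_eq0.
apply: le_trans (rs_le_sum i S0).
have : l * x i ^+ d <= rs S i * x i ^+ d.
  apply: le_trans (lP i) _; rewrite /Pv /rs mulr_suml; apply: ler_sum => t _.
  apply: ler_wpM2l; first exact: S0.
  rewrite -prod_cst; apply: ler_prod => j _; by rewrite x0 im.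
by rewrite ler_pM2r // exprn_gt0.
Qed.


Lemma closed_le_fun n (f g : V n -> R) : continuous f -> continuous g ->
  closed [set v | f v <= g v].
Proof.
move=> cf cg.
have -> : [set v | f v <= g v] = (fun v => g v - f v) @^-1` [set x | 0 <= x].
  by apply/seteqP; split => v /=; rewrite subr_ge0.
apply: preimage_closed; last exact: closed_ge.
by move=> v _; apply: continuousB; [exact: cg | exact: cf].
Qed.

Lemma closed_eq_fun n (f : V n -> R) c : continuous f -> closed [set v | f v = c].
Proof.
move=> cf; have -> : [set v | f v = c] = f @^-1` [set x | x = c] by [].
by apply: preimage_closed; [move=> v _; exact: cf | exact: closed_eq].
Qed.

Lemma closed_forall n (I : Type) (P : I -> V n -> Prop) :
  (forall i, closed [set v | P i v]) -> closed [set v | forall i, P i v].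
Proof.
move=> cP.
have -> : [set v | forall i, P i v] = \bigcap_(i in setT) [set v | P i v].
  apply/seteqP; split => v /= H i.
    by move=> _; exact: H.
  by exact: H.
by apply: closed_bigI => i _; exact: cP.
Qed.

Definition box n (a b : R) : set (V n) :=
  [set v | forall j, (match unlift ord_max j with Some _ => `[0, 1] | None => `[a, b] end)%classic (v ord0 j)].

Lemma box_compact n a b : compact (@box n a b).
Proof.
have := (@rV_compact R n.+1 (fun j => match unlift ord_max j with Some _ => `[0, 1] | None => `[a, b] end)%classic).
apply => j; case: (unlift _ _) => [_|]; exact: segment_compact.
Qed.

Lemma box_mkv n a b x l : (forall i, 0 <= x i <= 1) -> a <= l <= b -> box a b (@mkv n x l).
Proof.
move=> xb lb j; rewrite /mkv mxE; case: (unlift _ _) => [i|] /=; by rewrite in_itv /=.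
Qed.

Lemma box_xv n a b (v : V n) i : box a b v -> 0 <= xv v i <= 1.
Proof. by move/(_ (lift ord_max i)); rewrite liftK /= in_itv. Qed.
Lemma box_lv n a b (v : V n) : box a b v -> a <= lv v <= b.
Proof. by move/(_ ord_max); rewrite unlift_none /= in_itv. Qed.


Lemma cont_exp n (f : V n -> R) k : continuous f -> continuous (fun v => f v ^+ k).
Proof.
move=> cf; elim: k => [|k IH].
  have -> : (fun v => f v ^+ 0) = fun=> 1 by apply: funext => v; rewrite expr0.
  exact: cst_continuous.
have -> : (fun v => f v ^+ k.+1) = fun v => f v * f v ^+ k.
  by apply: funext => v; rewrite exprS.
by move=> v; apply: (continuousM (s := f) (t := fun v => f v ^+ k)); [exact: cf | exact: IH].
Qed.

Definition Mb d : R := \sum_(i < d) 2 ^+ (d.-1 - i).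

Lemma dexp_bound (x dl : R) d : 0 <= x <= 1 -> 0 <= dl <= 1 ->
  (x + dl) ^+ d - x ^+ d <= dl * Mb d.
Proof.
move=> /andP [x0 x1] /andP [d0 d1]; rewrite subrXX [x + dl]addrC addrK.
apply: ler_wpM2l => //; apply: ler_sum => i _.
rewrite -[2 ^+ _]mulr1; apply: ler_pM; rewrite ?exprn_ge0 ?addr_ge0 //.
  by apply: lerXn2r; rewrite ?nnegrE ?addr_ge0 //; lra.
exact: exprn_ile1.
Qed.

Lemma Mb_ge0 d : 0 <= Mb d.
Proof. by apply: sumr_ge0 => i _; rewrite exprn_ge0. Qed.

Lemma small_delta (x l g : R) d : 0 <= x <= 1 -> 0 <= l -> 0 < g ->
  exists dl, [/\ 0 < dl, dl <= 1 & l * ((x + dl) ^+ d - x ^+ d) < g].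
Proof.
move=> xb l0 g0; set M := Mb d.
have M0 : 0 <= M := Mb_ge0 d.
have lM0 : 0 <= l * M by rewrite mulr_ge0.
have lM1 : 0 < l * M + 1 by rewrite ltr_wpDl.
set dl := Num.min 1 (g / (l * M + 1)).
have dl0 : 0 < dl by rewrite lt_min ltr01 divr_gt0.
have dl1 : dl <= 1 by rewrite ge_min lexx.
have dlg : dl <= g / (l * M + 1) by rewrite ge_min lexx orbT.
exists dl; split => //.
apply: (le_lt_trans (y := l * (dl * M))).
  by apply: ler_wpM2l => //; apply: dexp_bound => //; rewrite (ltW dl0).
apply: (le_lt_trans (y := l * M * (g / (l * M + 1)))).
  by rewrite [dl * M]mulrC [l * (M * dl)]mulrA; apply: ler_wpM2l.
rewrite mulrA ltr_pdivrMr //; nra.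
Qed.

Lemma term_le_sum (I : finType) (F : I -> R) i : (forall j, 0 <= F j) -> F i <= \sum_j F j.
Proof.
by move=> F0; rewrite (bigD1 i) //= lerDl; apply: sumr_ge0 => j _.
Qed.


Lemma Pv_scale n d S (y : 'I_n -> R) c i :
  @Pv n d S (fun j => y j * c) i = Pv S y i * c ^+ d.
Proof.
rewrite /Pv mulr_suml; apply: eq_bigr => t _; rewrite -mulrA; congr (_ * _).
by rewrite big_split /= prod_cst.
Qed.

Lemma step1 n d S r : (0 < n)%N -> (0 < d)%N -> (forall i t, 0 <= S i t) ->
  (forall i j, 0 < S j (ctup d i)) -> 0 <= r -> (forall i, r <= @rs n d S i) ->
  exists l (x : 'I_n -> R), [/\ r <= l, l <= \sum_i rs S i, (forall i, 0 <= x i),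
     \sum_i x i = 1 & forall i, Pv S x i = l * x i ^+ d].
Proof.
move=> n0 d0 S0 Spos r0 rS.
set L := \sum_i rs S i.
have rsL i : rs S i <= L by apply: rs_le_sum.
have L0 : 0 <= L by apply: sumr_ge0 => i _; apply: sumr_ge0.
pose K := box 0 (L + 1) `&` ([set v : V n | \sum_i xv v i = 1] `&`
   [set v | forall i, lv v * xv v i ^+ d <= Pv S (xv v) i]).
have cK : compact K.
  apply: compact_closedI; first exact: box_compact.
  apply: closedI.
    by apply: closed_eq_fun; apply: cont_sum => i; exact: xv_cont.
  apply: closed_forall => i; apply: closed_le_fun; last exact: Pv_cont.
  move=> v; apply: (continuousM (s := @lv n) (t := fun v => xv v i ^+ d)).
    exact: lv_cont.
  by apply: cont_exp; exact: xv_cont.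
pose u := fun _ : 'I_n => (n%:R : R)^-1.
have n0R : (0 : R) < n%:R by rewrite ltr0n.
have u0 : forall i, 0 <= u i <= 1.
  move=> i; rewrite invr_ge0 ltW //= invr_le1 ?unitfE ?gt_eqF //.
  by rewrite ler1n.
have su : \sum_i u i = 1.
  by rewrite sumr_const card_ord -(mulr_natr (n%:R^-1)) mulVf // gt_eqF.
have Pu i : Pv S u i = rs S i * u i ^+ d.
  by rewrite /Pv /rs mulr_suml; apply: eq_bigr => t _; rewrite prod_cst.
have v0K : K (mkv u r).
  split; first apply: box_mkv => //.
    rewrite r0 /=; apply: (le_trans (rS (Ordinal n0))); apply: (le_trans (rsL _)).
    by rewrite lerDl.
  rewrite /=; have -> : xv (mkv u r) = u by apply: funext => j; rewrite xv_mkv.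
  split => // i; rewrite lv_mkv.
  rewrite Pu; apply: ler_wpM2r; [by rewrite exprn_ge0 // (andP (u0 i)).1|exact: rS].
have [c cinK cmax] : exists2 c, c \in K & forall t, t \in K -> lv t <= lv c.
  apply: EVT_max_rV => //; first by exists (mkv u r).
  by apply: continuous_subspaceT; exact: lv_cont.
move: cinK; rewrite inE => -[cbox [/= csum ccon]].
set x := xv c; set l := lv c.
have xb i : 0 <= x i <= 1 := box_xv i cbox.
have x0 i : 0 <= x i by case/andP: (xb i).
have lb : 0 <= l <= L + 1 := box_lv cbox.
have l0 : 0 <= l by case/andP: lb.
have rl : r <= l.
  by have := cmax (mkv u r); rewrite lv_mkv; apply; rewrite inE.
have lL : l <= L by apply: lam_bound n0 S0 x0 csum ccon.
exists l, x; split => // i0.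
apply/eqP; rewrite eq_le ccon andbT; apply: contraT; rewrite -ltNge => gap.
set g := Pv S x i0 - l * x i0 ^+ d.
have g0 : 0 < g by rewrite subr_gt0.
have [dl [dl0 dl1 dlg]] := small_delta d (xb i0) l0 g0.
pose y := fun j => if j == i0 then x j + dl else x j.
have xy j : 0 <= x j <= y j.
  by rewrite /y x0 /=; case: eqP => _ //; rewrite lerDl ltW.
have y0 j : 0 <= y j by case/andP: (xy j) => a b; apply: le_trans b.
have Pxy j : Pv S x j <= Pv S y j := Pv_mono j S0 xy.
have yi0 : y i0 = x i0 + dl by rewrite /y eqxx.
have gapy j : l * y j ^+ d < Pv S y j.
  case: (eqVneq j i0) => [->|ji0].
    rewrite yi0; apply: lt_le_trans (Pxy i0).
    by move: dlg; rewrite /g mulrBr; lra.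
  have -> : y j = x j by rewrite /y (negbTE ji0).
  apply: le_lt_trans (ccon j) _; rewrite -subr_gt0.
  have -> : Pv S y j - Pv S x j =
      \sum_t S j t * (\prod_(k < d) y (tnth t k) - \prod_(k < d) x (tnth t k)).
    by rewrite /Pv -sumrB; apply: eq_bigr => t _; rewrite mulrBr.
  apply: lt_le_trans (term_le_sum (ctup d i0) _).
    rewrite !prod_ctup yi0; apply: mulr_gt0; first exact: Spos.
    by rewrite subr_gt0 ltrXn2r ?ltrDl // -lt0n.
  move=> t; apply: mulr_ge0; first exact: S0.
  by rewrite subr_ge0; apply: ler_prod => k _; exact: xy.
have fpos : forall j, 0 < (Pv S y j - l * y j ^+ d) / (y j ^+ d + 1).
  by move=> j; rewrite divr_gt0 // ?subr_gt0 ?gapy // ltr_wpDl ?exprn_ge0.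
have [e e0 eb] := pos_lb fpos.
have ge j : (l + e) * y j ^+ d <= Pv S y j.
  have := eb j; rewrite ler_pdivlMr ?ltr_wpDl ?exprn_ge0 // => H.
  have := exprn_ge0 d (y0 j); move: H e0; rewrite !mulrDl !mulrDr; lra.
set s := \sum_j y j.
have ys j : y j <= s by apply: term_le_sum.
have s0 : 0 < s by apply: lt_le_trans (ys i0); rewrite yi0 ltr_wpDl.
pose z := fun j => y j * s^-1.
have zb j : 0 <= z j <= 1.
  apply/andP; split; first by rewrite /z mulr_ge0 // invr_ge0 ltW.
  by rewrite /z ler_pdivrMr // mul1r.
have sz : \sum_j z j = 1 by rewrite /z -mulr_suml mulfV // gt_eqF.
have me0 : 0 < Num.min e 1 by rewrite lt_min e0 ltr01.
have zcon j : (l + Num.min e 1) * z j ^+ d <= Pv S z j.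
  rewrite /z Pv_scale exprMn mulrA; apply: ler_wpM2r.
    by rewrite exprn_ge0 // invr_ge0 ltW.
  apply: le_trans (ge j); apply: ler_wpM2r; first exact: exprn_ge0.
  by rewrite lerD2l ge_min lexx.
have zK : K (mkv z (l + Num.min e 1)).
  split; first apply: box_mkv => //.
    apply/andP; split; first exact: addr_ge0 l0 (ltW me0).
    by apply: lerD lL _; rewrite ge_min lexx orbT.
  rewrite /=; have -> : xv (mkv z (l + Num.min e 1)) = z.
    by apply: funext => j; rewrite xv_mkv.
  by split => // j; rewrite lv_mkv; exact: zcon.
have := cmax (mkv z (l + Num.min e 1)); rewrite lv_mkv inE => /(_ zK).
by rewrite gerDl leNgt me0.
Qed.


Lemma cont_norm n (f : V n -> R) : continuous f -> continuous (fun v => `|f v|).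
Proof.
move=> cf v; apply: (continuous_comp (f := f) (g := Num.norm)); first exact: cf.
exact: norm_continuous.
Qed.

Lemma PFlite n d S r : (0 < n)%N -> (0 < d)%N -> (forall i t, 0 <= S i t) ->
  0 <= r -> (forall i, r <= @rs n d S i) ->
  exists l (x : 'I_n -> R), [/\ r <= l, exists i, x i != 0 &
     forall i, Pv S x i = l * x i ^+ d].
Proof.
move=> n0 d0 S0 r0 rS.
set N := \sum_(t : d.-tuple 'I_n) (1 : R).
have N0 : 0 <= N by apply: sumr_ge0.
set M2 := \sum_(i < n) N.
have M20 : 0 <= M2 by apply: sumr_ge0.
set L := \sum_i rs S i.
set Lam := L + M2.
pose Se (e : R) := fun i t => S i t + e.
have rsSe e i : rs (Se e) i = rs S i + e * N.
  by rewrite /rs /Se big_split /= mulr_sumr mulr1.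
have PSe e x i : Pv (Se e) x i = Pv S x i + e * \sum_t \prod_(k < d) x (tnth t k).
  by rewrite /Pv /Se mulr_sumr -big_split /=; apply: eq_bigr => t _; rewrite mulrDl.
have prodle (x : 'I_n -> R) (t : d.-tuple 'I_n) : (forall i, 0 <= x i <= 1) -> 0 <= \prod_(k < d) x (tnth t k) <= 1.
  move=> xb; rewrite prodr_ge0 /=; last by move=> k _; case/andP: (xb (tnth t k)).
  apply: (le_trans (y := \prod_(k < d) (1:R))); last by rewrite prod_cst expr1n.
  by apply: ler_prod => k _; exact: xb.
have pert e : 0 < e -> e <= 1 -> exists l (x : 'I_n -> R),
    [/\ r <= l <= Lam, (forall i, 0 <= x i <= 1), \sum_i x i = 1 &
        forall i, Pv S x i + e * \sum_t \prod_(k < d) x (tnth t k) = l * x i ^+ d].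
  move=> e0 e1.
  have [|||l [x [rl lL x0 sx eig]]] := @step1 n d (Se e) r n0 d0 _ _ r0.
  - by move=> i t; rewrite addr_ge0 // ltW.
  - by move=> i j; rewrite ltr_wpDl.
  - by move=> i; rewrite rsSe; apply: le_trans (rS i) _; rewrite lerDl mulr_ge0 // ltW.
  have xb i : 0 <= x i <= 1.
    rewrite x0 /= -sx; apply: term_le_sum => j; exact: x0.
  exists l, x; split => //; last by move=> i; rewrite -PSe.
  rewrite rl /=; apply: le_trans lL _.
  rewrite /Lam /L -big_split /=; apply: ler_sum => i _; rewrite rsSe lerD2l.
  by rewrite /N -[X in _ <= X]mul1r; apply: ler_wpM2r.
pose G := fun v : V n => \sum_i `|Pv S (xv v) i - lv v * xv v i ^+ d| + `|\sum_i xv v i - 1|.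
have [c cin cmin] : exists2 c, c \in box r Lam & forall t, t \in box r Lam -> G c <= G t.
  apply: EVT_min_rV; first by have [l [x [lb xb _ _]]] := pert 1 ltr01 (lexx 1);
    exists (mkv x l); apply: box_mkv.
    exact: box_compact.
  apply: continuous_subspaceT => v.
  apply: (continuousD (f := fun v : V n => \sum_i `|Pv S (xv v) i - lv v * xv v i ^+ d|)
     (g := fun v : V n => `|\sum_i xv v i - 1|)); last first.
    apply: cont_norm => w.
    apply: (continuousB (f := fun v : V n => \sum_i xv v i) (g := fun=> 1)).
      by apply: cont_sum => i; exact: xv_cont.
    exact: cst_continuous.
  apply: cont_sum => i; apply: cont_norm => w.
  apply: (continuousB (f := fun v : V n => Pv S (xv v) i) (g := fun v => lv v * xv v i ^+ d)).
    exact: Pv_cont.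
  apply: (continuousM (s := @lv n) (t := fun v => xv v i ^+ d)); first exact: lv_cont.
  by apply: cont_exp; exact: xv_cont.
move: cin; rewrite inE => cbox.
have G0 : G c = 0.
  apply/eqP; rewrite eq_le (_ : 0 <= G c) ?andbT; last first.
    by rewrite addr_ge0 // sumr_ge0.
  apply: contraT; rewrite -ltNge => g0.
  set g := G c in g0.
  set e := Num.min 1 (g / (M2 + 1)).
  have e0 : 0 < e by rewrite lt_min ltr01 divr_gt0 // ltr_wpDl.
  have e1 : e <= 1 by rewrite ge_min lexx.
  have eg : e <= g / (M2 + 1) by rewrite ge_min lexx orbT.
  have [l [x [lb xb sx eig]]] := pert e e0 e1.
  have := cmin (mkv x l); rewrite inE => /(_ (box_mkv xb lb)).
  rewrite /G lv_mkv.
  have -> : xv (mkv x l) = x by apply: funext => j; rewrite xv_mkv.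
  rewrite sx subrr normr0 addr0.
  have : \sum_i `|Pv S x i - l * x i ^+ d| <= e * M2.
    rewrite /M2 mulr_sumr; apply: ler_sum => i _; rewrite -eig.
    rewrite opprD addrA subrr sub0r normrN ger0_norm; last first.
      apply: mulr_ge0; first exact: ltW.
      by apply: sumr_ge0 => t _; case/andP: (prodle x t xb).
    apply: ler_wpM2l; first exact: ltW.
    by apply: ler_sum => t _; case/andP: (prodle x t xb).
  move=> H1 H2.
  have : e * M2 < g.
    apply: (le_lt_trans (y := g / (M2 + 1) * M2)); first exact: ler_wpM2r.
    rewrite mulrAC ltr_pdivrMr ?ltr_wpDl //; nra.
  by rewrite ltNge (le_trans H2 H1).
have Gt : forall i, Pv S (xv c) i = lv c * xv c i ^+ d.
  move=> i; apply/eqP; rewrite -subr_eq0 -normr_eq0; apply/eqP.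
  have : \sum_i `|Pv S (xv c) i - lv c * xv c i ^+ d| = 0.
    move: G0; rewrite /G => /eqP; rewrite paddr_eq0 ?sumr_ge0 // => /andP [/eqP -> _].
    done.
  by move/psumr_eq0P; apply.
have sx : \sum_i xv c i = 1.
  move: G0; rewrite /G => /eqP; rewrite paddr_eq0 ?sumr_ge0 // => /andP [_].
  by rewrite normr_eq0 subr_eq0 => /eqP.
exists (lv c), (xv c); split => //.
- by case/andP: (box_lv cbox).
apply: contrapT => H.
move: sx; rewrite big1 => [/eqP|i _]; first by rewrite eq_sym oner_eq0.
by apply/eqP; apply: contrapT => Hi; apply: H; exists i; apply/negP.
Qed.

End PF.

Theorem corollary4p2 (R : realType) (m n k : nat) (A : m.-tuple 'I_n -> R[i]) :
  (2 <= m)%N -> (1 <= n)%N -> (1 <= k)%N ->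
  (forall l : R[i],
      is_eigenvalue ((m - 1) ^ k + 1)%N (tpow m (of_tuple A) k) l ->
      `|l| <= Rmax m (of_tuple A) ^+ mu m k)
  /\
  ((forall t : m.-tuple 'I_n, 0 <= A t) ->
     (exists l : R[i],
        is_eigenvalue ((m - 1) ^ k + 1)%N (tpow m (of_tuple A) k) l /\
        rmin m (of_tuple A) ^+ mu m k <= `|l|)
     /\
     (forall l : R[i],
        is_eigenvalue ((m - 1) ^ k + 1)%N (tpow m (of_tuple A) k) l ->
        `|l| <= Rmax m (of_tuple A) ^+ mu m k)).
Proof.
move=> m2 n1 k1.
have ub : forall l : R[i],
    is_eigenvalue ((m - 1) ^ k + 1)%N (tpow m (of_tuple A) k) l ->
    `|l| <= Rmax m (of_tuple A) ^+ mu m k.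
  move=> l /eig_bound [i H]; apply: le_trans H _; exact: tpow_rowsum_ub.
split => // A0; split => //.
set T := tpow m (of_tuple A) k.
have A'0 : forall s, 0 <= of_tuple A s.
  by move=> s; rewrite /of_tuple; case: insubP => // t _ _; exact: A0.
have T0 : forall s, 0 <= T s by apply: tpow_ge0.
set d := ((m - 1) ^ k + 1 - 1)%N.
have d0 : (0 < d)%N by rewrite /d addnK expn_gt0; apply/orP; left; lia.
pose S := fun (i : 'I_n) (t : d.-tuple 'I_n) => (complex.Re (T (i :: t)) : R).
have TS i (t : d.-tuple 'I_n) : T (i :: t) = (S i t)%:C%C.
  by rewrite /S RRe_real // ger0_real.
have S0 i t : 0 <= S i t by rewrite -ler0c -TS.
set rr := rmin m (of_tuple A) ^+ mu m k.
have rr0 : 0 <= rr by rewrite exprn_ge0 // rmin_ge0.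
pose r := (complex.Re rr : R).
have rC : r%:C%C = rr by rewrite /r RRe_real // ger0_real.
have r0 : 0 <= r by rewrite -ler0c rC.
have rS i : r <= rs S i.
  rewrite -lecR rC /rs rmorph_sum /=.
  have -> : \sum_(t : d.-tuple 'I_n) (S i t)%:C%C = rowsum ((m - 1) ^ k + 1) T i.
    by rewrite rowsum_nneg //; apply: eq_bigr => t _; rewrite TS.
  by apply: tpow_rowsum_lb.
have [l [x [rl [i xi] eig]]] := PFlite n1 d0 S0 r0 rS.
exists l%:C%C; split.
  exists (fun j => (x j)%:C%C); split; first by exists i; rewrite fmorph_eq0.
  move=> j; rewrite -rmorphXn -rmorphM -eig /Pv rmorph_sum /=.
  by apply: eq_bigr => t _; rewrite rmorphM rmorph_prod TS.
have l0 : 0 <= l := le_trans r0 rl.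
by rewrite ger0_norm ?ler0c // -rC lecR.
Qed.
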